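(* Let $\mathcal{X}\subseteq\mathbb{R}^n$, $\mathcal{Y}=\{0,1\}$, let $\mathcal{Z}$ be a set (the representation space), let $\mathcal{G}$ be a class of functions $g:\mathcal{X}\to\mathcal{Z}$ and $\mathcal{F}$ a class of functions $f:\mathcal{Z}\to\mathcal{Y}$. Let $p_S,p_T$ be probability distributions on $\mathcal{X}\times\mathcal{Y}$. Then for all $f\in\mathcal{F}$ and $g\in\mathcal{G}$, $$R_T(fg)\le R_S(fg)+d_{\mathcal{F}\Delta\mathcal{F}}\big(p_S^g(Z),p_T^g(Z)\big)+d_{\mathcal{F}_{\mathcal{G}\Delta\mathcal{G}}}(p_S,p_T)+\lambda_{\mathcal{F}\mathcal{G}}(g),$$ where $$\lambda_{\mathcal{F}\mathcal{G}}(g)=\inf_{f'\in\mathcal{F},\,g'\in\mathcal{G}}\Big[2R_S(f'g)+R_S(f'g')+R_T(f'g')\Big].$$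
   Context: $fg$ denotes the composition $f\circ g:\mathcal{X}\to\mathcal{Y}$. The loss $\ell$ is the zero-one loss $\ell(a,b)=\mathbf{1}[a\neq b]$. For a hypothesis $h:\mathcal{X}\to\mathcal{Y}$ and $D\in\{S,T\}$, the risk is $R_D(h)=\mathbb{E}_{(x,y)\sim p_D}[\ell(h(x),y)]$, and for two hypotheses $h,h'$ the disagreement is $R_D(h,h')=\mathbb{E}_{x\sim p_D}[\ell(h(x),h'(x))]$, where $x\sim p_D$ refers to the marginal of $p_D$ on $\mathcal{X}$. $p_S^g(Z)$, $p_T^g(Z)$ denote the distributions of $g(X)$ for $X$ drawn from the $\mathcal{X}$-marginal of $p_S$, resp. $p_T$. The latent divergence is $d_{\mathcal{F}\Delta\mathcal{F}}(p_S^g(Z),p_T^g(Z))=\sup_{f_1,f_2\in\mathcal{F}}|R_S(f_1g,f_2g)-R_T(f_1g,f_2g)|$. The $\mathcal{F}_{\mathcal{G}\Delta\mathcal{G}}$-divergence is $d_{\mathcal{F}_{\mathcal{G}\Delta\mathcal{G}}}(p_S,p_T)=\sup_{f\in\mathcal{F};\,g_1,g_2\in\mathcal{G}}|R_S(fg_1,fg_2)-R_T(fg_1,fg_2)|$. *)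

(* Defs.v *)
From mathcomp Require Import all_boot all_order all_algebra.
From mathcomp Require Import all_classical all_reals all_analysis.
Set Implicit Arguments. Unset Strict Implicit. Unset Printing Implicit Defensive.
Import Order.TTheory GRing.Theory Num.Theory.
Local Open Scope classical_set_scope.
Local Open Scope ereal_scope.

Section Risks.
Context {d : measure_display} {X : measurableType d} {R : realType}.

(* R_D(h) = E_{(x,y)~p}[1[h x <> y]] = p {(x,y) | h x != y} *)
Definition risk (p : probability (X * bool)%type R) (h : X -> bool) : \bar R :=
  p [set xy | h xy.1 != xy.2].

(* R_D(h,h') = E_{x ~ marginal of p}[1[h x <> h' x]] *)
Definition disagreement (p : probability (X * bool)%type R) (h h' : X -> bool) : \bar R :=
  p [set xy | h xy.1 != h' xy.1].

Definition latent_div {Z : Type} (F : set (Z -> bool)) (g : X -> Z)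
    (pS pT : probability (X * bool)%type R) : \bar R :=
  ereal_sup [set v | exists f1 f2, [/\ F f1, F f2 &
     v = `|disagreement pS (f1 \o g) (f2 \o g) - disagreement pT (f1 \o g) (f2 \o g)|]].

Definition FGG_div {Z : Type} (F : set (Z -> bool)) (G : set (X -> Z))
    (pS pT : probability (X * bool)%type R) : \bar R :=
  ereal_sup [set v | exists f g1 g2, [/\ F f, G g1, G g2 &
     v = `|disagreement pS (f \o g1) (f \o g2) - disagreement pT (f \o g1) (f \o g2)|]].

Definition lambda_FG {Z : Type} (F : set (Z -> bool)) (G : set (X -> Z))
    (pS pT : probability (X * bool)%type R) (g : X -> Z) : \bar R :=
  ereal_inf [set v | exists f' g', [/\ F f', G g' &
     v = 2%:E * risk pS (f' \o g) + risk pS (f' \o g') + risk pT (f' \o g')]].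
End Risks.

(* Main.v *)
Require Import Defs.
From mathcomp Require Import all_boot all_order all_algebra.
From mathcomp Require Import all_classical all_reals all_analysis.
Import Order.TTheory GRing.Theory Num.Theory.
Local Open Scope classical_set_scope.
Local Open Scope ereal_scope.

Section H.
Context {d : measure_display} {X : measurableType d} {R : realType}.
Implicit Types (u v w : X * bool -> bool) (p : probability (X * bool)%type R).

Lemma mneq u v : measurable_fun setT u -> measurable_fun setT v ->
  measurable [set z | u z != v z].
Proof.
move=> mu mv.
have mpre : forall w b, measurable_fun setT w -> measurable (w @^-1` [set b]).
  move=> w b mw; rewrite -[_ @^-1` _]setTI; exact: mw.
have -> : [set z | u z != v z] =
  (u @^-1` [set true] `&` v @^-1` [set false]) `|`
  (u @^-1` [set false] `&` v @^-1` [set true]).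
  apply/seteqP; split => z /=.
    by case: (u z); case: (v z) => //= _; [left|right].
  by case=> -[-> ->].
by apply: measurableU; apply: measurableI; apply: mpre.
Qed.

Lemma tri p u v w : measurable_fun setT u -> measurable_fun setT v ->
  measurable_fun setT w ->
  p [set z | u z != w z] <= p [set z | u z != v z] + p [set z | v z != w z].
Proof.
move=> hu hv hw.
have H2 := measureU2 p (mneq _ _ hu hv) (mneq _ _ hv hw).
apply: le_trans H2.
apply: le_measure; rewrite ?inE; first exact: mneq.
  exact: measurableU (mneq _ _ hu hv) (mneq _ _ hv hw).
move=> z /=; case: (u z); case: (v z); case: (w z) => //=; by [left|right].
Qed.

Lemma pfin p (A : set (X * bool)) : measurable A -> p A \is a fin_num.
Proof.
move=> mA; rewrite ge0_fin_numE //; apply: (le_lt_trans (probability_le1 p mA)).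
by rewrite ltry.
Qed.

Lemma absle (x y : \bar R) : x \is a fin_num -> y \is a fin_num ->
  x <= y + `|y - x|.
Proof.
move: x y => [x| |] [y| |] //= _ _.
rewrite -EFinD lee_fin.
rewrite distrC; have := ler_norm (x - y)%R.
by rewrite -lerBlDl.
Qed.
Lemma re (a b L c FG e : \bar R) :
  ((a+b)+L)+((b+c)+FG)+e = (a+L+FG)+(b+b+c+e).
Proof. by rewrite !addrA [LHS](ACl (1*3*6*2*4*5*7))%AC. Qed.
End H.

Lemma two_mul {R : realType} (x : \bar R) : 0 <= x -> 2%:E * x = x + x.
Proof.
case: x => [r| |] //= _; first by rewrite -EFinM -EFinD mulr2n mulrDl mul1r.
by rewrite mulry gtr0_sg // mul1e.
Qed.

Theorem theorem4 (d : measure_display) (X : measurableType d) (R : realType)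
  (Z : Type) (G : set (X -> Z)) (F : set (Z -> bool))
  (pS pT : probability (X * bool)%type R)
  (Hmeas : forall f g, F f -> G g -> measurable_fun setT (f \o g)) :
  forall f g, F f -> G g ->
    risk pT (f \o g) <=
      risk pS (f \o g) + latent_div F g pS pT + FGG_div F G pS pT
      + lambda_FG F G pS pT g.
Proof.
move=> f g Ff Gg.
have mfst : forall h : X -> bool, measurable_fun setT h ->
    measurable_fun setT (h \o fst : X * bool -> bool).
  by move=> h mh; apply: measurableT_comp mh measurable_fst.
have msnd : measurable_fun setT (snd : X * bool -> bool) := measurable_snd.
have sym : forall (u v : X * bool -> bool), [set z | u z != v z] = [set z | v z != u z].
  by move=> u v; apply/seteqP; split => z /=; rewrite eq_sym.
have finS : forall u v : X * bool -> bool, measurable_fun setT u -> measurable_fun setT v ->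
   pS [set z | u z != v z] \is a fin_num.
  by move=> u v hu hv; apply: pfin; apply: mneq.
have finT : forall u v : X * bool -> bool, measurable_fun setT u -> measurable_fun setT v ->
   pT [set z | u z != v z] \is a fin_num.
  by move=> u v hu hv; apply: pfin; apply: mneq.
set L := latent_div F g pS pT.
set FG := FGG_div F G pS pT.
have L0 : 0 <= L.
  apply: le_trans (abse_ge0 (disagreement pS (f \o g) (f \o g) - disagreement pT (f \o g) (f \o g))) _.
  by apply: ereal_sup_ubound; exists f, f.
have FG0 : 0 <= FG.
  apply: le_trans (abse_ge0 (disagreement pS (f \o g) (f \o g) - disagreement pT (f \o g) (f \o g))) _.
  by apply: ereal_sup_ubound; exists f, g, g.
have mh := Hmeas _ _ Ff Gg.
set s := risk pS (f \o g) + L + FG.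
have s0 : 0 <= s by rewrite /s !adde_ge0.
have key : forall f' g', F f' -> G g' ->
     risk pT (f \o g) <= s + (2%:E * risk pS (f' \o g) + risk pS (f' \o g') + risk pT (f' \o g')).
  move=> f' g' Ff' Gg'.
  have mk := Hmeas _ _ Ff' Gg'.
  have mm := Hmeas _ _ Ff' Gg.
  have hf := mfst _ mh; have kf := mfst _ mk; have mf := mfst _ mm.
  have T1 := tri pT _ _ _ hf kf msnd.
  have T2 := tri pT _ _ _ hf mf kf.
  have T3 : pT [set z | (f \o g) z.1 != (f' \o g) z.1] <=
            pS [set z | (f \o g) z.1 != (f' \o g) z.1] + L.
    apply: le_trans (absle _ _ (finT _ _ hf mf) (finS _ _ hf mf)) _.
    apply: leeD => //; apply: ereal_sup_ubound; by exists f, f'.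
  have T4 : pT [set z | (f' \o g) z.1 != (f' \o g') z.1] <=
            pS [set z | (f' \o g) z.1 != (f' \o g') z.1] + FG.
    apply: le_trans (absle _ _ (finT _ _ mf kf) (finS _ _ mf kf)) _.
    apply: leeD => //; apply: ereal_sup_ubound; by exists f', g, g'.
  have T5 : pS [set z | (f \o g) z.1 != (f' \o g) z.1] <=
      pS [set z | (f \o g) z.1 != z.2] + pS [set z | (f' \o g) z.1 != z.2].
    have -> : [set z | (f' \o g) z.1 != z.2] = [set z | z.2 != (f' \o g) z.1].
      by apply/seteqP; split => z /=; rewrite eq_sym.
    exact: tri pS _ _ _ hf msnd mf.
  have T6 : pS [set z | (f' \o g) z.1 != (f' \o g') z.1] <=
      pS [set z | (f' \o g) z.1 != z.2] + pS [set z | (f' \o g') z.1 != z.2].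
    have -> : [set z | (f' \o g') z.1 != z.2] = [set z | z.2 != (f' \o g') z.1].
      by apply/seteqP; split => z /=; rewrite eq_sym.
    exact: tri pS _ _ _ mf msnd kf.
  rewrite two_mul; last exact: measure_ge0.
  rewrite /s /risk -re.
  apply: le_trans T1 _; apply: leeD => //.
  apply: le_trans T2 _; apply: leeD.
    by apply: le_trans T3 _; apply: leeD => //; exact: T5.
  by apply: le_trans T4 _; apply: leeD => //; exact: T6.
clearbody s.
case: (boolP (s \is a fin_num)) => sfin.
  rewrite -leeBlDl // /lambda_FG.
  apply/ereal_infP => v Hv.
  rewrite leeBlDl //; case: Hv => f' [g' [Ff' Gg' ->]]. exact: key.
clear key. move: s0 sfin; case: s => [r| |] //= _ _.
have lam0 : 0 <= lambda_FG F G pS pT g.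
  apply/ereal_infP => v [f' [g' [_ _ ->]]].
  by rewrite !adde_ge0 // mule_ge0.
rewrite addye ?leey //. by rewrite gt_eqF // (lt_le_trans ltNy0 lam0).
Qed.
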